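(* Let $S\ge2$, $\mathcal S=\{1,\dots,S\}$ and $T=3$. The union of the following two sets of moves is a Markov basis for the toric homogeneous Markov chain model on $\mathcal S^3$. (1) Crossing path swappings: for paths $\omega=(s_1,s_2,s_3)$, $\omega'=(s'_1,s'_2,s'_3)$ with $s_t=s'_t$ for some $t$, the move $e_\omega+e_{\omega'}-e_{\tilde\omega}-e_{\tilde\omega'}$ with $\tilde\omega=(s_1,\dots,s_t,s'_{t+1},\dots,s'_3)$, $\tilde\omega'=(s'_1,\dots,s'_t,s_{t+1},\dots,s_3)$. (2) The moves $\bar{\mathbf z}=\sum_{\omega\in W_1}e_\omega-\sum_{\omega\in W_2}e_\omega$, for all $m=2,\dots,S$, all distinct $i_1,\dots,i_m\in\mathcal S$, all distinct $j_1,\dots,j_m\in\mathcal S$, and all choices of states $s_j\in\mathcal S$ ($j\in\mathcal I\setminus\mathcal J$) and $\tilde s_j\in\mathcal S$ ($j\in\mathcal J\setminus\mathcal I$), where $\mathcal I=\{i_1,\dots,i_m\}$, $\mathcal J=\{j_1,\dots,j_m\}$ and, with indices taken cyclically ($j_0:=j_m$, $i_{m+1}:=i_1$): for $j=j_l\in\mathcal J$ put $i(j)=i_l$ and $i'(j)=i_{l+1}$; for $j=i_l\in\mathcal I$ put $k(j)=j_{l-1}$ and $k'(j)=j_l$; $$W_1=\{(i(j),j,k(j)):j\in\mathcal I\cap\mathcal J\}\cup\{(s_j,j,k(j)):j\in\mathcal I\setminus\mathcal J\}\cup\{(i(j),j,\tilde s_j):j\in\mathcal J\setminus\mathcal I\},$$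 $$W_2=\{(i'(j),j,k'(j)):j\in\mathcal I\cap\mathcal J\}\cup\{(s_j,j,k'(j)):j\in\mathcal I\setminus\mathcal J\}\cup\{(i'(j),j,\tilde s_j):j\in\mathcal J\setminus\mathcal I\}.$$
   Context: Paths are elements of $\mathcal S^3$; a contingency table is a function $\mathbf x:\mathcal S^3\to\mathbb Z_{\ge0}$, and $e_\omega$ is the table with a single path $\omega$. The toric homogeneous Markov chain model has sufficient statistic $\mathbf b(\mathbf x)=A\mathbf x$ consisting of initial-state counts $x^1_i=\sum_{\omega:\omega_1=i}x(\omega)$ and total transition counts $x^+_{ij}=\sum_\omega x(\omega)\,\#\{t\in\{1,2\}:\omega_t=i,\omega_{t+1}=j\}$. The fiber of $\mathbf b$ is the set of nonnegative integer tables $\mathbf x$ with $A\mathbf x=\mathbf b$; a move is an integer $\mathbf z$ with $A\mathbf z=0$. A set $\mathcal B$ of moves is a Markov basis if for every $\mathbf b$ and $\mathbf x,\mathbf y$ in the fiber of $\mathbf b$ there are $\mathbf z_1,\dots,\mathbf z_K\in\mathcal B\cup(-\mathcal B)$ with $\mathbf y=\mathbf x+\sum_k\mathbf z_k$ and all partial sums $\mathbf x+\sum_{k\le h}\mathbf z_k\ge0$. *)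

(* Defs.v *)
(* States are 'I_S (0-indexed: state k+1 of the paper is k). *)
From HB Require Import structures.
From mathcomp Require Import all_boot all_order all_algebra.
Set Implicit Arguments. Unset Strict Implicit. Unset Printing Implicit Defensive.
Import Order.TTheory GRing.Theory Num.Theory.
Local Open Scope ring_scope.

(* paths of length T = 3: omega t for t : 'I_3 (time t+1 of the paper) *)
Definition path (S : nat) := {ffun 'I_3 -> 'I_S}.
Definition table (S : nat) := {ffun path S -> int}.

Definition mk3 (S : nat) (a b c : 'I_S) : path S :=
  [ffun t : 'I_3 => nth a [:: a; b; c] t].

Definition e (S : nat) (w : path S) : table S := [ffun u => ((u == w) : nat)%:Z].

Definition ntrans (S : nat) (w : path S) (i j : 'I_S) : nat :=
  #|[set t : 'I_2 | (w (inord t) == i) && (w (inord t.+1) == j)]|.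

Definition init_count (S : nat) (z : table S) (i : 'I_S) : int :=
  \sum_(w : path S | w ord0 == i) z w.

Definition trans_count (S : nat) (z : table S) (i j : 'I_S) : int :=
  \sum_(w : path S) z w * (ntrans w i j)%:Z.

Definition stat (S : nat) (z : table S) :
  {ffun 'I_S -> int} * {ffun 'I_S * 'I_S -> int} :=
  ([ffun i => init_count z i], [ffun ij => trans_count z ij.1 ij.2]).

Definition in_fiber (S : nat) b (x : table S) : Prop :=
  (forall w, 0 <= x w) /\ stat x = b.

Definition is_move (S : nat) (z : table S) : Prop :=
  stat z = ([ffun _ => 0], [ffun _ => 0]).

Definition markov_basis (S : nat) (B : table S -> Prop) : Prop :=
  (forall z, B z -> is_move z) /\
  forall b (x y : table S), in_fiber b x -> in_fiber b y ->
    exists zs : seq (table S),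
      (forall z, z \in zs -> B z \/ B (- z)) /\
      y = x + \sum_(z <- zs) z /\
      (forall h : nat, (h <= size zs)%N -> forall w, 0 <= (x + \sum_(z <- take h zs) z) w).

Definition swap_path (S : nat) (w w' : path S) (t : 'I_3) : path S :=
  [ffun k : 'I_3 => if (k <= t)%N then w k else w' k].

Definition crossing_move (S : nat) (z : table S) : Prop :=
  exists (w w' : path S) (t : 'I_3), w t = w' t /\
    z = e w + e w' - e (swap_path w w' t) - e (swap_path w' w t).

(* (2) the moves zbar. ii l = i_{l+1}, jj l = j_{l+1} (0-indexed, cyclic);
   s j = s_j for j in I\J, st j = \tilde s_j for j in J\I (other values unused). *)
Section Zbar.
Variables (S m : nat) (ii jj : 'I_m -> 'I_S) (s st : 'I_S -> 'I_S).
Definition Iset : {set 'I_S} := [set ii l | l : 'I_m].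
Definition Jset : {set 'I_S} := [set jj l | l : 'I_m].
Definition prv (l : 'I_m) : 'I_m := ord_pred l.
Definition nxt (l : 'I_m) : 'I_m := ordS l.
(* ll = (l, l'), j = jj l = ii l' in I cap J: i(j) = ii l, i'(j) = ii (l+1), k(j) = jj (l'-1), k'(j) = jj l' *)
Definition W1 : {set path S} :=
  [set mk3 (ii ll.1) (jj ll.1) (jj (prv ll.2)) | ll : 'I_m * 'I_m & jj ll.1 == ii ll.2] :|:
  [set mk3 (s (ii l)) (ii l) (jj (prv l)) | l : 'I_m & ii l \notin Jset] :|:
  [set mk3 (ii l) (jj l) (st (jj l)) | l : 'I_m & jj l \notin Iset].
Definition W2 : {set path S} :=
  [set mk3 (ii (nxt ll.1)) (jj ll.1) (jj ll.2) | ll : 'I_m * 'I_m & jj ll.1 == ii ll.2] :|: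
  [set mk3 (s (ii l)) (ii l) (jj l) | l : 'I_m & ii l \notin Jset] :|:
  [set mk3 (ii (nxt l)) (jj l) (st (jj l)) | l : 'I_m & jj l \notin Iset].
Definition zbar : table S := \sum_(w in W1) e w - \sum_(w in W2) e w.
End Zbar.

Definition zbar_move (S : nat) (z : table S) : Prop :=
  exists (m : nat) (ii jj : 'I_m -> 'I_S) (s st : 'I_S -> 'I_S),
    (2 <= m)%N /\ (m <= S)%N /\ injective ii /\ injective jj /\
    z = zbar ii jj s st.

(* Main.v *)
Require Import Defs.
From mathcomp Require Import all_boot all_order all_algebra.
From mathcomp Require Import zify ring lra.
Set Implicit Arguments. Unset Strict Implicit. Unset Printing Implicit Defensive.
Import Order.TTheory GRing.Theory Num.Theory.
Local Open Scope ring_scope.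

Notation pth := Defs.path.
Definition o0 : 'I_3 := ord0.
Definition o1 : 'I_3 := @Ordinal 3 1 isT.
Definition o2 : 'I_3 := @Ordinal 3 2 isT.

Definition lin S (P : pred (pth S)) (x : table S) : int := \sum_(w | P w) x w.

Lemma linD S P (x y : table S) : lin P (x + y) = lin P x + lin P y.
Proof. by rewrite /lin -big_split; apply: eq_bigr => w _; rewrite ffunE. Qed.
Lemma linN S P (x : table S) : lin P (- x) = - lin P x.
Proof. by rewrite /lin -sumrN; apply: eq_bigr => w _; rewrite ffunE. Qed.
Lemma linB S P (x y : table S) : lin P (x - y) = lin P x - lin P y.
Proof. by rewrite linD linN. Qed.
Lemma lin0 S P : lin P (0 : table S) = 0.
Proof. by rewrite /lin big1 // => w _; rewrite ffunE. Qed.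
Lemma lin_sum S P (I : Type) (r : seq I) (Q : pred I) (F : I -> table S) :
  lin P (\sum_(i <- r | Q i) F i) = \sum_(i <- r | Q i) lin P (F i).
Proof. exact: (big_morph _ (linD P) (lin0 P)). Qed.
Lemma lin_e S P (v : pth S) : lin P (e v) = (P v : nat)%:Z.
Proof.
rewrite /lin; under eq_bigr do rewrite ffunE.
case Pv: (P v).
  rewrite (bigD1 v) //= eqxx big1 ?addr0 // => w /andP[_ /negbTE ->] //.
rewrite big1 // => w Pw; case: eqP => // wv; by rewrite wv Pv in Pw.
Qed.

Definition Fp S (a b : 'I_S) : pred (pth S) := fun w => (w o0 == a) && (w o1 == b).
Definition Gp S (a b : 'I_S) : pred (pth S) := fun w => (w o1 == a) && (w o2 == b).
Definition Mp S (b : 'I_S) : pred (pth S) := fun w => w o1 == b.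
Definition Ip S (a : 'I_S) : pred (pth S) := fun w => w o0 == a.

Lemma ntransE S (w : pth S) i j : ntrans w i j = (Fp i j w : nat) + (Gp i j w : nat).
Proof.
rewrite /ntrans cardsE -sum1_card big_mkcond !big_ord_recl big_ord0 /= !unfold_in /=.
rewrite /bump /=.
have -> : (inord 0 : 'I_3) = o0 by apply: val_inj; rewrite /= inordK.
have -> : (inord 1 : 'I_3) = o1 by apply: val_inj; rewrite /= inordK.
have -> : (inord 2 : 'I_3) = o2 by apply: val_inj; rewrite /= inordK.
rewrite /Fp /Gp addn0.
by case: (_ && _); case: (_ && _).
Qed.

Lemma trans_countE S (z : table S) i j :
  trans_count z i j = lin (Fp i j) z + lin (Gp i j) z.
Proof.
rewrite /trans_count /lin [X in _ = X + _]big_mkcond [X in _ = _ + X]big_mkcond /= -big_split.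
apply: eq_bigr => w _; rewrite ntransE PoszD mulrDr.
by case: (Fp i j w); case: (Gp i j w); rewrite ?mulr1 ?mulr0.
Qed.

Lemma init_countE S (z : table S) i : init_count z i = lin (Ip i) z.
Proof. by []. Qed.

Lemma lin_part S (f : pth S -> 'I_S) (Q : pred (pth S)) (x : table S) :
  \sum_(a : 'I_S) lin (fun w => Q w && (f w == a)) x = lin Q x.
Proof.
by rewrite /lin (partition_big f (fun _ => true)).
Qed.

Lemma sumF_row S (x : table S) a : \sum_b lin (Fp a b) x = lin (Ip a) x.
Proof. exact: (lin_part (fun w => w o1)). Qed.
Lemma sumF_col S (x : table S) b : \sum_a lin (Fp a b) x = lin (Mp b) x.
Proof.
rewrite -(lin_part (fun w => w o0)); apply: eq_bigr => a _.
by rewrite /lin; apply: eq_bigl => w; rewrite /Fp andbC.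
Qed.
Lemma sumG_row S (x : table S) b : \sum_c lin (Gp b c) x = lin (Mp b) x.
Proof. exact: (lin_part (fun w => w o2)). Qed.

Lemma is_moveI S (z : table S) :
  (forall a b, lin (Fp a b) z + lin (Gp a b) z = 0) ->
  (forall a, \sum_b lin (Fp a b) z = 0) -> is_move z.
Proof.
move=> HT HI; rewrite /is_move /stat; congr pair; apply/ffunP => i; rewrite !ffunE.
  by rewrite init_countE -sumF_row HI.
by rewrite trans_countE HT.
Qed.

Lemma stat_move S (x z : table S) : is_move z -> stat (x + z) = stat x.
Proof.
rewrite /is_move /stat => -[/ffunP H1 /ffunP H2]; congr pair; apply/ffunP => i; rewrite !ffunE.
  have := H1 i; rewrite !ffunE => H0.
  by rewrite init_countE in H0; rewrite !init_countE linD H0 addr0.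
have := H2 i; rewrite !ffunE => H0.
by rewrite trans_countE in H0; rewrite !trans_countE !linD addrACA H0 addr0.
Qed.

Lemma stat_eq_F S (x y : table S) : stat x = stat y ->
  (forall a, \sum_b (lin (Fp a b) y - lin (Fp a b) x) = 0) /\
  (forall b, \sum_a (lin (Fp a b) y - lin (Fp a b) x) = 0) /\
  (forall a b, lin (Gp a b) y - lin (Gp a b) x = - (lin (Fp a b) y - lin (Fp a b) x)).
Proof.
rewrite /stat => -[/ffunP H1 /ffunP H2].
have HI a : lin (Ip a) x = lin (Ip a) y.
  by have := H1 a; rewrite !ffunE.
have HT a b : lin (Fp a b) x + lin (Gp a b) x = lin (Fp a b) y + lin (Gp a b) y.
  by have := H2 (a, b); rewrite !ffunE !trans_countE.
have HM b : lin (Mp b) x = lin (Mp b) y.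
  have E z : lin (Mp b) z = \sum_c (lin (Fp b c) z + lin (Gp b c) z) - lin (Ip b) z.
    by rewrite big_split /= sumF_row sumG_row; lia.
  rewrite !E; congr (_ - _); [apply: eq_bigr => c _; exact: HT | exact: HI].
split; [|split].
- by move=> a; rewrite sumrB !sumF_row; have := HI a; lia.
- by move=> b; rewrite sumrB !sumF_col; have := HM b; lia.
- move=> a b; have := HT a b; lia.
Qed.

Definition reach S (B : table S -> Prop) (x y : table S) : Prop :=
  exists zs : seq (table S),
      (forall z, z \in zs -> B z \/ B (- z)) /\
      y = x + \sum_(z <- zs) z /\
      (forall h : nat, (h <= size zs)%N -> forall w, 0 <= (x + \sum_(z <- take h zs) z) w).

Lemma reach_refl S B (x : table S) : (forall w, 0 <= x w) -> reach B x x.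
Proof.
move=> Hx; exists [::]; split => //; split; first by rewrite big_nil addr0.
by move=> h _ w; rewrite big_nil addr0.
Qed.

Lemma reach_step S B (x z : table S) : B z \/ B (- z) -> (forall w, 0 <= x w) ->
  (forall w, 0 <= (x + z) w) -> reach B x (x + z).
Proof.
move=> Bz Hx Hxz; exists [:: z]; split; first by move=> z'; rewrite inE => /eqP ->.
split; first by rewrite big_seq1.
move=> [|[|h]] //= _ w; first by rewrite big_nil addr0.
by rewrite big_seq1.
Qed.

Lemma reach_trans S B (x y t : table S) : reach B x y -> reach B y t -> reach B x t.
Proof.
move=> [zs1 [B1 [E1 P1]]] [zs2 [B2 [E2 P2]]].
exists (zs1 ++ zs2); split.
  by move=> z; rewrite mem_cat => /orP[/B1|/B2].
split; first by rewrite E2 E1 big_cat addrA.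
move=> h hle w; rewrite take_cat; case: ltnP => hs.
  by apply: P1; rewrite ltnW.
rewrite big_cat addrA -E1; apply: P2.
by rewrite leq_subLR -size_cat.
Qed.

Lemma mk3E0 S (a b c : 'I_S) : mk3 a b c o0 = a. Proof. by rewrite ffunE. Qed.
Lemma mk3E1 S (a b c : 'I_S) : mk3 a b c o1 = b. Proof. by rewrite ffunE. Qed.
Lemma mk3E2 S (a b c : 'I_S) : mk3 a b c o2 = c. Proof. by rewrite ffunE. Qed.

Lemma pathE S (w : pth S) : w = mk3 (w o0) (w o1) (w o2).
Proof.
apply/ffunP => t; rewrite ffunE; case: t => [[|[|[|t]]] Ht] //=.
- by congr (w _); apply: val_inj.
- by congr (w _); apply: val_inj.
- by congr (w _); apply: val_inj.
Qed.

Lemma mk3_inj S (a b c a' b' c' : 'I_S) : mk3 a b c = mk3 a' b' c' ->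
  [/\ a = a', b = b' & c = c'].
Proof.
move=> E; split.
- by have := congr1 (fun w : pth S => w o0) E; rewrite !mk3E0.
- by have := congr1 (fun w : pth S => w o1) E; rewrite !mk3E1.
- by have := congr1 (fun w : pth S => w o2) E; rewrite !mk3E2.
Qed.

Definition sw S (a b c a' c' : 'I_S) : table S :=
  e (mk3 a b c) + e (mk3 a' b c') - e (mk3 a b c') - e (mk3 a' b c).

Lemma sw_crossing S (a b c a' c' : 'I_S) : crossing_move (sw a b c a' c').
Proof.
exists (mk3 a b c), (mk3 a' b c'), o1; split; first by rewrite mk3E1 mk3E1.
have E (p q r p' q' r' : 'I_S) : q = q' ->
    swap_path (mk3 p q r) (mk3 p' q' r') o1 = mk3 p q r'.
  move=> <-; apply/ffunP => t; rewrite !ffunE; case: t => [[|[|[|t]]] Ht] //=.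
by rewrite /sw !E.
Qed.

Lemma sw_F S (a b c a' c' p q : 'I_S) : lin (Fp p q) (sw a b c a' c') = 0.
Proof.
rewrite /sw !linB linD !lin_e /Fp !mk3E0 !mk3E1.
by case: (a == p); case: (a' == p); case: (b == q) => /=; rewrite ?subrr ?sub0r ?subr0; lia.
Qed.

Lemma sw_G S (a b c a' c' p q : 'I_S) : lin (Gp p q) (sw a b c a' c') = 0.
Proof.
rewrite /sw !linB linD !lin_e /Gp !mk3E1 !mk3E2.
by case: (c == q); case: (c' == q); case: (b == p) => /=; lia.
Qed.

Lemma sum_gt S (P : pred (pth S)) (x y : table S) w0 :
  lin P x = lin P y -> P w0 -> y w0 < x w0 -> exists w, P w && (x w < y w).
Proof.
move=> E P0 lt0.
case: (pickP (fun w => P w && (x w < y w))) => [w Hw|Hn]; first by exists w.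
suff : lin P y < lin P x by rewrite E ltxx.
rewrite /lin (bigD1 w0 P0) [X in _ < X](bigD1 w0 P0) /=.
apply: ltr_leD => //; apply: ler_sum => w /andP[Pw _].
by have := Hn w; rewrite Pw /= => /negbT; rewrite -leNgt.
Qed.

Lemma ih1 (p q : int) : 0 <= q -> q < p -> 0 <= p - 1. Proof. lia. Qed.

Lemma ih2 (p q : int) (n : nat) : q < (n.+1)%:Z -> p < q -> p < n%:Z. Proof. lia. Qed.

Definition pos (d : int) : int := if 0 <= d then d else 0.

Lemma mk3_neq0 S (p q r p' q' r' : 'I_S) : p != p' -> mk3 p q r != mk3 p' q' r'.
Proof. by move=> H; apply/eqP => /mk3_inj [E _ _]; rewrite E eqxx in H. Qed.
Lemma mk3_neq2 S (p q r p' q' r' : 'I_S) : r != r' -> mk3 p q r != mk3 p' q' r'.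
Proof. by move=> H; apply/eqP => /mk3_inj [_ _ E]; rewrite E eqxx in H. Qed.

Lemma mk3_eqE S (p q r p' q' r' : 'I_S) :
  (mk3 p q r == mk3 p' q' r') = [&& p == p', q == q' & r == r'].
Proof.
apply/eqP/and3P => [/mk3_inj [-> -> ->]|[/eqP -> /eqP -> /eqP ->]]; by rewrite ?eqxx.
Qed.

Lemma sw_val S (a b c a' c' : 'I_S) v : sw a b c a' c' v =
  ((v == mk3 a b c) : nat)%:Z + ((v == mk3 a' b c') : nat)%:Z
  - ((v == mk3 a b c') : nat)%:Z - ((v == mk3 a' b c) : nat)%:Z.
Proof. by rewrite /sw !ffunE. Qed.

Lemma sw_cases S (a b c a' c' : 'I_S) v : a != a' -> c != c' ->
  0 <= sw a b c a' c' v \/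
  (sw a b c a' c' v = -1 /\ (v = mk3 a b c' \/ v = mk3 a' b c)).
Proof.
move=> na nc; rewrite sw_val.
have na' : a' != a by rewrite eq_sym.
have nc' : c' != c by rewrite eq_sym.
case: (eqVneq v (mk3 a b c')) => [->|n1].
  rewrite !mk3_eqE !eqxx (negbTE na) (negbTE nc') /=.
  by right; split => //; left.
case: (eqVneq v (mk3 a' b c)) => [->|n2].
  rewrite !mk3_eqE !eqxx (negbTE na') (negbTE nc) /=.
  by right; split => //; right.
by left; rewrite /=; case: (v == _); case: (v == _).
Qed.

Lemma sw_at S (a b c a' c' : 'I_S) : a != a' -> c != c' ->
  sw a b c a' c' (mk3 a b c) = 1.
Proof.
move=> na nc; rewrite sw_val !mk3_eqE !eqxx (negbTE na) (negbTE nc) /=.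
by [].
Qed.

Lemma ih3 (x y : int) : x < y -> 0 < pos (y - x) - pos (y - (x + 1)).
Proof. by rewrite /pos => h; case: ifP; case: ifP; lia. Qed.
Lemma ih4 (x y d : int) : 0 <= d -> 0 <= pos (y - x) - pos (y - (x + d)).
Proof. by rewrite /pos => h; case: ifP; case: ifP; lia. Qed.
Lemma ih5 (x y : int) : y < x -> 0 <= pos (y - x) - pos (y - (x + -1)).
Proof. by rewrite /pos => h; case: ifP; case: ifP; lia. Qed.

Lemma cross_connect S (B : table S -> Prop) (x y : table S) :
  (forall z, crossing_move z -> B z) ->
  (forall w, 0 <= x w) -> (forall w, 0 <= y w) ->
  (forall a b, lin (Fp a b) x = lin (Fp a b) y) ->
  (forall a b, lin (Gp a b) x = lin (Gp a b) y) -> reach B x y.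
Proof.
move=> HB Hx0 Hy HF0 HG0.
suff H n : forall x : table S, \sum_v pos (y v - x v) < n%:Z -> (forall w, 0 <= x w) ->
  (forall a b, lin (Fp a b) x = lin (Fp a b) y) ->
  (forall a b, lin (Gp a b) x = lin (Gp a b) y) -> reach B x y.
  apply: (H (absz (\sum_v pos (y v - x v))).+1) => //.
  have : 0 <= \sum_v pos (y v - x v) by apply: sumr_ge0 => v _; rewrite /pos; case: ifP.
  lia.
clear Hx0 HF0 HG0; elim: n => [|n IH] {}x.
  have : 0 <= \sum_v pos (y v - x v) by apply: sumr_ge0 => v _; rewrite /pos; case: ifP.
  by move=> + Hlt; rewrite leNgt Hlt.
move=> Hn Hx HF HG.
case: (pickP (fun w => x w != y w)) => [w0 Hw0|Heq]; last first.
  have <- : x = y by apply/ffunP => w; have := Heq w; rewrite /= => /negbFE /eqP.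
  exact: reach_refl.
have [w Hw] : exists w, x w < y w.
  have [lt|gt] : x w0 < y w0 \/ y w0 < x w0 by move: Hw0; lia.
  - by exists w0.
  - have P0 : Fp (w0 o0) (w0 o1) w0 by rewrite /Fp !eqxx.
    have [w /andP[_ Hw]] := sum_gt (HF (w0 o0) (w0 o1)) P0 gt.
    by exists w.
have Ew : w = mk3 (w o0) (w o1) (w o2) by exact: pathE.
set a := w o0 in Ew; set b := w o1 in Ew; set c := w o2 in Ew.
have P1 : Fp a b w by rewrite /Fp !eqxx.
have [w1 /andP[F1 H1]] := sum_gt (esym (HF a b)) P1 Hw.
have P2 : Gp b c w by rewrite /Gp !eqxx.
have [w2 /andP[G2 H2]] := sum_gt (esym (HG b c)) P2 Hw.
move: F1 G2; rewrite /Fp /Gp => /andP[/eqP e10 /eqP e11] /andP[/eqP e21 /eqP e22].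
set c' := w1 o2; set a' := w2 o0.
have E1 : w1 = mk3 a b c' by rewrite {1}(pathE w1) e10 e11.
have E2 : w2 = mk3 a' b c by rewrite {1}(pathE w2) e21 e22.
have nc : c != c'.
  by apply/eqP => cc; move: H1; rewrite E1 -cc -Ew => H1; move: Hw; rewrite ltNge ltW.
have na : a != a'.
  by apply/eqP => aa; move: H2; rewrite E2 -aa -Ew => H2; move: Hw; rewrite ltNge ltW.
set z := sw a b c a' c'.
have Hxz : forall v, 0 <= (x + z) v.
  move=> v; rewrite ffunE /z; case: (sw_cases b v na nc) => [|[-> [->|->]]].
  - by move=> h; apply: addr_ge0.
  - rewrite -E1; exact: ih1 (Hy w1) H1.
  - by rewrite -E2; exact: ih1 (Hy w2) H2.
apply: (reach_trans (y := x + z)).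
  by apply: reach_step => //; left; apply: HB; exact: sw_crossing.
apply: IH => //.
- apply: (@ih2 _ (\sum_v pos (y v - x v))) => //.
  rewrite -subr_gt0 -sumrB (bigD1 w) //= ltr_pwDl //.
  + rewrite ffunE /z [in sw _ _ _ _ _ w]Ew sw_at //; exact: ih3.
  + apply: sumr_ge0 => v _; rewrite ffunE /z.
    case: (sw_cases b v na nc) => [h|[-> [->|->]]].
    * exact: ih4.
    * by rewrite -E1; exact: ih5.
    * by rewrite -E2; exact: ih5.
- by move=> p q; rewrite linD sw_F addr0.
- by move=> p q; rewrite linD sw_G addr0.
Qed.

Lemma sum0_neg n (f : 'I_n -> int) i0 :
  \sum_i f i = 0 -> 0 < f i0 -> exists i, f i < 0.
Proof.
move=> S0 p0.
case: (pickP (fun i => f i < 0)) => [i hi|hn]; first by exists i.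
suff : 0 < \sum_i f i by rewrite S0 ltxx.
rewrite (bigD1 i0) //= ltr_pwDl // sumr_ge0 // => i _.
by have := hn i; rewrite /= => /negbT; rewrite -leNgt.
Qed.

Lemma sum0_pos n (f : 'I_n -> int) i0 :
  \sum_i f i = 0 -> f i0 < 0 -> exists i, 0 < f i.
Proof.
move=> S0 n0.
have h1 : \sum_i (fun i => - f i) i = 0 by rewrite sumrN S0 oppr0.
have h2 : 0 < (fun i => - f i) i0 by rewrite /= oppr_gt0.
have [i hi] := sum0_neg h1 h2.
by exists i; move: hi; rewrite /= oppr_lt0.
Qed.

Lemma iter_mul T (h : T -> T) x p q : iter p h x = x -> iter (q * p) h x = x.
Proof. by move=> Hp; elim: q => [|q IH] //; rewrite mulSn iterD IH Hp. Qed.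

Lemma iter_mod T (h : T -> T) x p k : iter p h x = x -> iter (k %% p) h x = iter k h x.
Proof.
move=> Hp; rewrite {2}(divn_eq k p) addnC iterD iter_mul //.
Qed.

Lemma cycle_exists S (D : 'I_S -> 'I_S -> int) (a0 b0 : 'I_S) :
  (forall a, \sum_b D a b = 0) -> (forall b, \sum_a D a b = 0) -> 0 < D a0 b0 ->
  exists m (ii jj : 'I_m -> 'I_S), (2 <= m)%N /\ injective ii /\ injective jj /\
    (forall l, 0 < D (ii l) (jj l)) /\ (forall l, D (ii (ordS l)) (jj l) < 0).
Proof.
move=> Hrow Hcol D0.
pose f a := odflt b0 [pick b | 0 < D a b].
pose g b := odflt a0 [pick a | D a b < 0].
have fP a b : 0 < D a b -> 0 < D a (f a).
  move=> h; rewrite /f; case: pickP => [b' //|hn].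
  by have := hn b; rewrite /= h.
have gP a b : 0 < D a b -> D (g b) b < 0.
  move=> h; have [a' ha'] := @sum0_neg S (fun a => D a b) a (Hcol b) h.
  rewrite /g; case: pickP => [a'' //|hn].
  by have := hn a'; rewrite /= ha'.
pose phi a := g (f a).
have phiP a : 0 < D a (f a) -> 0 < D (phi a) (f (phi a)).
  move=> h; have hg := gP _ _ h.
  have [b' hb'] := @sum0_pos S (fun b => D (g (f a)) b) (f a) (Hrow _) hg.
  exact: fP hb'.
have itP k : 0 < D (iter k phi a0) (f (iter k phi a0)).
  elim: k => [|k IH] /=; [exact: fP D0 | exact: phiP].
have phiE a : phi a = g (f a) by [].
clearbody phi; clearbody f g.
have [k1 [k2 [nk E12]]] : exists k1 k2 : nat, k1 <> k2 /\ iter k1 phi a0 = iter k2 phi a0.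
  case: (boolP [exists k1 : 'I_S.+1, exists k2 : 'I_S.+1,
                  (k1 != k2) && (iter k1 phi a0 == iter k2 phi a0)]).
    move=> /existsP [k1 /existsP [k2 /andP [nk /eqP E]]].
    exists k1, k2; split => //; move=> /val_inj E'.
    by rewrite E' eqxx in nk.
  move=> hn; exfalso.
  have inj : injective (fun k : 'I_S.+1 => iter k phi a0).
    move=> k1 k2 E; apply/eqP; apply: contraNT hn => nk.
    by apply/existsP; exists k1; apply/existsP; exists k2; rewrite nk /= E eqxx.
  by have := leq_card _ inj; rewrite !card_ord ltnn.
wlog lt12 : k1 k2 nk E12 / (k1 < k2)%N.
  move=> W; case: (ltngtP k1 k2) => h.
  - exact: W h.
  - apply: (W k2 k1 _ (esym E12) h) => E; exact: nk (esym E).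
  - by case: (nk h).
pose istar := iter k1 phi a0.
have per0 : iter (k2 - k1)%N phi istar = istar.
  rewrite /istar -iterD subnK; [exact: esym E12 | exact: ltnW].
have exP : exists p, (0 < p)%N && (iter p phi istar == istar).
  by exists (k2 - k1)%N; rewrite subn_gt0 lt12 per0 eqxx.
case: (ex_minnP exP) => p /andP [p0 /eqP pP] pmin.
have iP k : 0 < D (iter k phi istar) (f (iter k phi istar)).
  by rewrite /istar -iterD; apply: itP.
exists p, (fun l : 'I_p => iter l phi istar), (fun l : 'I_p => f (iter l phi istar)).
have nextE (l : 'I_p) : iter (ordS l) phi istar = phi (iter l phi istar).
  by rewrite /= iter_mod // iterS.
have iinj : injective (fun l : 'I_p => iter l phi istar).
  suff W (l1 l2 : 'I_p) : (l1 < l2)%N -> iter l1 phi istar <> iter l2 phi istar.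
    move=> l1 l2 /= E; case: (ltngtP l1 l2) => h.
    - by have := W _ _ h E.
    - by have := W _ _ h (esym E).
    - exact: val_inj.
  move=> lt E.
  have : (p <= (p - l2) + l1)%N.
    apply: pmin; apply/andP; split; first by rewrite addn_gt0 subn_gt0 ltn_ord.
    by rewrite iterD E -iterD subnK ?pP // ltnW.
  have := ltn_ord l2; lia.
have negP (l : 'I_p) : D (iter (ordS l) phi istar) (f (iter l phi istar)) < 0.
  by rewrite nextE phiE; exact: gP (iP l).
split.
  case: (leqP 2 p) => // hp; exfalso.
  have p1 : p = 1%N by lia.
  pose l : 'I_p := Ordinal p0.
  have Sl : ordS l = l by apply: val_inj; rewrite /= p1.
  have h1 := iP l; have h2 := negP l; rewrite Sl in h2.
  by move: (lt_trans h2 h1); rewrite ltxx.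
split; first exact: iinj.
split.
  move=> l1 l2 /= E; apply: ordS_inj; apply: iinj => /=.
  by rewrite !nextE !phiE E.
split; first by move=> l; exact: iP.
exact: negP.
Qed.


Notation ind b := (((b : bool) : nat)%:Z).

Definition li S m (jj : 'I_m -> 'I_S) (b : 'I_S) := [pick l | jj l == b].
Definition al S m (ii jj : 'I_m -> 'I_S) (s : 'I_S -> 'I_S) b :=
  if li jj b is Some l then ii l else s b.
Definition al' S m (ii jj : 'I_m -> 'I_S) (s : 'I_S -> 'I_S) b :=
  if li jj b is Some l then ii (nxt l) else s b.
Definition ka S m (ii jj : 'I_m -> 'I_S) (st : 'I_S -> 'I_S) b :=
  if li ii b is Some l then jj (prv l) else st b.
Definition ka' S m (ii jj : 'I_m -> 'I_S) (st : 'I_S -> 'I_S) b :=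
  if li ii b is Some l then jj l else st b.

Lemma liE S m (jj : 'I_m -> 'I_S) l : injective jj -> li jj (jj l) = Some l.
Proof.
move=> ij; rewrite /li; case: pickP => [l' /eqP /ij -> //|hn].
by have := hn l; rewrite eqxx.
Qed.

Lemma liN S m (jj : 'I_m -> 'I_S) b : b \notin Jset jj -> li jj b = None.
Proof.
move=> nb; rewrite /li; case: pickP => [l' /eqP E|//].
by move: nb; rewrite -E /Jset; move/negP; case; apply/imsetP; exists l'.
Qed.

Lemma liNI S m (ii : 'I_m -> 'I_S) b : b \notin Iset ii -> li ii b = None.
Proof. exact: (@liN S m ii b). Qed.

Lemma li_cases S m (jj : 'I_m -> 'I_S) b : injective jj ->
  (exists l, b = jj l /\ li jj b = Some l) \/ (b \notin Jset jj /\ li jj b = None).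
Proof.
move=> ij; case: (boolP (b \in Jset jj)) => [/imsetP [l _ ->]|nb].
  by left; exists l; rewrite liE.
by right; rewrite liN.
Qed.

Lemma W1E S m (ii jj : 'I_m -> 'I_S) s st : injective ii -> injective jj ->
  W1 ii jj s st =
  [set mk3 (al ii jj s b) b (ka ii jj st b) | b in Iset ii :|: Jset jj].
Proof.
move=> iI iJ; apply/setP => w; apply/idP/idP.
- rewrite !inE => /orP [/orP [|]|].
  + case/imsetP => -[l l'] /=; rewrite inE /= => /eqP E ->.
    apply/imsetP; exists (jj l); first by rewrite inE; apply/orP; right; apply/imsetP; exists l.
    by rewrite /al /ka liE // E liE.
  + case/imsetP => l; rewrite inE => nJ ->.
    apply/imsetP; exists (ii l); first by rewrite inE; apply/orP; left; apply/imsetP; exists l.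
    by rewrite /al /ka liE // liN.
  + case/imsetP => l; rewrite inE => nI ->.
    apply/imsetP; exists (jj l); first by rewrite inE; apply/orP; right; apply/imsetP; exists l.
    by rewrite /al /ka liE // liNI.
- case/imsetP => b Kb ->.
  case: (li_cases b iJ) => [[l [Eb Hl]]|[nJ Hl]]; case: (li_cases b iI) => [[l' [Eb' Hl']]|[nI Hl']].
  + rewrite /al /ka Hl Hl'; rewrite !inE; apply/orP; left; apply/orP; left.
    apply/imsetP; exists (l, l'); first by rewrite inE /= -Eb -Eb'.
    by rewrite /= -Eb.
  + rewrite /al /ka Hl Hl'; rewrite !inE; apply/orP; right.
    apply/imsetP; exists l; first by rewrite inE -Eb.
    by rewrite -Eb.
  + rewrite /al /ka Hl Hl'; rewrite !inE; apply/orP; left; apply/orP; right.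
    apply/imsetP; exists l'; first by rewrite inE -Eb'.
    by rewrite -Eb'.
  + by move: Kb; rewrite inE (negbTE nI) (negbTE nJ).
Qed.

Lemma W2E S m (ii jj : 'I_m -> 'I_S) s st : injective ii -> injective jj ->
  W2 ii jj s st =
  [set mk3 (al' ii jj s b) b (ka' ii jj st b) | b in Iset ii :|: Jset jj].
Proof.
move=> iI iJ; apply/setP => w; apply/idP/idP.
- rewrite !inE => /orP [/orP [|]|].
  + case/imsetP => -[l l'] /=; rewrite inE /= => /eqP E ->.
    apply/imsetP; exists (jj l); first by rewrite inE; apply/orP; right; apply/imsetP; exists l.
    by rewrite /al' /ka' liE // E liE.
  + case/imsetP => l; rewrite inE => nJ ->.
    apply/imsetP; exists (ii l); first by rewrite inE; apply/orP; left; apply/imsetP; exists l.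
    by rewrite /al' /ka' liE // liN.
  + case/imsetP => l; rewrite inE => nI ->.
    apply/imsetP; exists (jj l); first by rewrite inE; apply/orP; right; apply/imsetP; exists l.
    by rewrite /al' /ka' liE // liNI.
- case/imsetP => b Kb ->.
  case: (li_cases b iJ) => [[l [Eb Hl]]|[nJ Hl]]; case: (li_cases b iI) => [[l' [Eb' Hl']]|[nI Hl']].
  + rewrite /al' /ka' Hl Hl'; rewrite !inE; apply/orP; left; apply/orP; left.
    apply/imsetP; exists (l, l'); first by rewrite inE /= -Eb -Eb'.
    by rewrite /= -Eb.
  + rewrite /al' /ka' Hl Hl'; rewrite !inE; apply/orP; right.
    apply/imsetP; exists l; first by rewrite inE -Eb.
    by rewrite -Eb.
  + rewrite /al' /ka' Hl Hl'; rewrite !inE; apply/orP; left; apply/orP; right.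
    apply/imsetP; exists l'; first by rewrite inE -Eb'.
    by rewrite -Eb'.
  + by move: Kb; rewrite inE (negbTE nI) (negbTE nJ).
Qed.

Lemma zbarE S m (ii jj : 'I_m -> 'I_S) s st : injective ii -> injective jj ->
  zbar ii jj s st =
  \sum_(b in Iset ii :|: Jset jj) e (mk3 (al ii jj s b) b (ka ii jj st b)) -
  \sum_(b in Iset ii :|: Jset jj) e (mk3 (al' ii jj s b) b (ka' ii jj st b)).
Proof.
move=> iI iJ; rewrite /zbar W1E // W2E // !big_imset //.
- by move=> b1 b2 _ _ /mk3_inj [_ -> _].
- by move=> b1 b2 _ _ /mk3_inj [_ -> _].
Qed.

Lemma sum_ind_at S (K : {set 'I_S}) (P : pred 'I_S) b0 :
  \sum_(b in K) ind (P b && (b == b0)) = ind ((b0 \in K) && P b0).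
Proof.
case: (boolP (b0 \in K)) => Kb.
  rewrite (bigD1 b0) //= eqxx andbT big1 ?addr0 // => b /andP [_ nb].
  by rewrite (negbTE nb) andbF.
rewrite big1 // => b Kb'; case: eqP => [E|]; first by rewrite -E Kb' in Kb.
by rewrite andbF.
Qed.

Lemma sum_ind_at' S (K : {set 'I_S}) (P : pred 'I_S) b0 :
  \sum_(b in K) ind ((b == b0) && P b) = ind ((b0 \in K) && P b0).
Proof. by rewrite -sum_ind_at; apply: eq_bigr => b _; rewrite andbC. Qed.

Definition Cm S m (ii jj : 'I_m -> 'I_S) (a b : 'I_S) : int :=
  if li jj b is Some l then ind (ii l == a) - ind (ii (nxt l) == a) else 0.
Definition Cm' S m (ii jj : 'I_m -> 'I_S) (b c : 'I_S) : int :=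
  if li ii b is Some l then ind (jj (prv l) == c) - ind (jj l == c) else 0.

Lemma zbarF S m (ii jj : 'I_m -> 'I_S) s st a b : injective ii -> injective jj ->
  lin (Fp a b) (zbar ii jj s st) = Cm ii jj a b.
Proof.
move=> iI iJ; rewrite zbarE // linB !lin_sum.
under eq_bigr do rewrite lin_e /Fp mk3E0 mk3E1.
under [X in _ - X]eq_bigr do rewrite lin_e /Fp mk3E0 mk3E1.
rewrite (sum_ind_at _ (fun b => al ii jj s b == a)) (sum_ind_at _ (fun b => al' ii jj s b == a)).
rewrite /Cm /al /al'; case: (li_cases b iJ) => [[l [Eb ->]]|[nJ ->]].
  have hJ : jj l \in Jset jj by apply/imsetP; exists l.
  by rewrite Eb inE hJ orbT.
by rewrite subrr.
Qed.

Lemma zbarG S m (ii jj : 'I_m -> 'I_S) s st b c : injective ii -> injective jj ->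
  lin (Gp b c) (zbar ii jj s st) = Cm' ii jj b c.
Proof.
move=> iI iJ; rewrite zbarE // linB !lin_sum.
under eq_bigr do rewrite lin_e /Gp mk3E1 mk3E2.
under [X in _ - X]eq_bigr do rewrite lin_e /Gp mk3E1 mk3E2.
rewrite (sum_ind_at' _ (fun b => ka ii jj st b == c)) (sum_ind_at' _ (fun b => ka' ii jj st b == c)).
rewrite /Cm' /ka /ka'; case: (li_cases b iI) => [[l [Eb ->]]|[nI ->]].
  have hI : ii l \in Iset ii by apply/imsetP; exists l.
  by rewrite Eb inE hI.
by rewrite subrr.
Qed.

Lemma sum_pick S m (jj : 'I_m -> 'I_S) (h : 'I_m -> int) b : injective jj ->
  \sum_l ind (jj l == b) * h l = if li jj b is Some l then h l else 0.
Proof.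
move=> iJ; case: (li_cases b iJ) => [[l [Eb ->]]|[nJ ->]].
  rewrite (bigD1 l) //= Eb eqxx mul1r big1 ?addr0 // => l' nl.
  by rewrite (inj_eq iJ) (negbTE nl) mul0r.
rewrite big1 // => l _; case: eqP => [E|]; last by rewrite mul0r.
by move: nJ; rewrite -E; move/negP; case; apply/imsetP; exists l.
Qed.

Lemma CmE S m (ii jj : 'I_m -> 'I_S) a b : injective jj -> Cm ii jj a b =
  \sum_l ind (jj l == b) * (ind (ii l == a) - ind (ii (nxt l) == a)).
Proof. by move=> iJ; rewrite sum_pick. Qed.

Lemma Cm'E S m (ii jj : 'I_m -> 'I_S) b c : injective ii -> Cm' ii jj b c =
  \sum_l ind (ii l == b) * (ind (jj (prv l) == c) - ind (jj l == c)).
Proof. by move=> iI; rewrite sum_pick. Qed.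

Lemma sum_ind1 S (c : 'I_S) (x : int) : \sum_b ind (c == b) * x = x.
Proof.
rewrite (bigD1 c) //= eqxx mul1r big1 ?addr0 // => b nb.
by rewrite eq_sym (negbTE nb) mul0r.
Qed.

Lemma zbar_is_move S m (ii jj : 'I_m -> 'I_S) s st : injective ii -> injective jj ->
  is_move (zbar ii jj s st).
Proof.
move=> iI iJ; apply: is_moveI => [a b|a].
  rewrite zbarF // zbarG // CmE // Cm'E //.
  have HC : \sum_l ind (ii l == a) * ind (jj (prv l) == b) =
            \sum_l ind (jj l == b) * ind (ii (nxt l) == a).
    rewrite (reindex_inj (@ordS_inj m)) /=; apply: eq_bigr => l _.
    by rewrite /prv /nxt ordSK mulrC.
  have HA : \sum_l ind (ii l == a) * ind (jj l == b) =
            \sum_l ind (jj l == b) * ind (ii l == a).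
    by apply: eq_bigr => l _; rewrite mulrC.
  under eq_bigr do rewrite mulrBr.
  under [X in _ + X = _]eq_bigr do rewrite mulrBr.
  rewrite !sumrB HC HA.
  by rewrite addrA subrK subrr.
under eq_bigr do rewrite zbarF // CmE //.
rewrite exchange_big /=.
under eq_bigr do rewrite sum_ind1.
rewrite sumrB (reindex_inj (@ordS_inj m)) /=.
by rewrite subrr.
Qed.

Lemma is_move0 S : is_move (0 : table S).
Proof. by apply: is_moveI => [a b|a]; rewrite ?lin0 ?addr0 // big1 // => b _; rewrite lin0. Qed.

Lemma sw_is_move S (a b c a' c' : 'I_S) : is_move (sw a b c a' c').
Proof.
apply: is_moveI => [p q|p]; first by rewrite sw_F sw_G addr0.
by rewrite big1 // => q _; rewrite sw_F.
Qed.

Lemma swap_mk3 S (a b c a' b' c' : 'I_S) :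
  [/\ swap_path (mk3 a b c) (mk3 a' b' c') o0 = mk3 a b' c',
      swap_path (mk3 a b c) (mk3 a' b' c') o1 = mk3 a b c' &
      swap_path (mk3 a b c) (mk3 a' b' c') o2 = mk3 a b c].
Proof.
by split; apply/ffunP => t; rewrite !ffunE; case: t => [[|[|[|t]]] Ht] //=.
Qed.

Lemma crossing_is_move S (z : table S) : crossing_move z -> is_move z.
Proof.
move=> [w [w' [t [Et ->]]]].
rewrite (pathE w) (pathE w') in Et *.
move: (w o0) (w o1) (w o2) (w' o0) (w' o1) (w' o2) Et => a b c a' b' c' Et.
have : t = o0 \/ t = o1 \/ t = o2.
  case: t {Et} => [[|[|[|t]]] Ht]; [left|right; left|right; right|by []];
  by apply: val_inj.
case: (swap_mk3 a b c a' b' c') => E0 E1 E2.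
case: (swap_mk3 a' b' c' a b c) => E0' E1' E2'.
move=> [Ht|[Ht|Ht]]; subst t.
- rewrite E0 E0'; move: Et; rewrite !mk3E0 => <-.
  rewrite addrK subrr; exact: is_move0.
- rewrite E1 E1'; move: Et; rewrite !mk3E1 => <-.
  exact: sw_is_move.
- rewrite E2 E2'.
  have -> : forall X Y : table S, X + Y - X - Y = 0.
    by move=> X Y; rewrite (addrC X) addrK subrr.
  exact: is_move0.
Qed.

Lemma lin_ge0 S P (x : table S) : (forall w, 0 <= x w) -> 0 <= lin P x.
Proof. by move=> Hx; apply: sumr_ge0 => w _. Qed.

Lemma lin_pos_ex S P (x : table S) : 0 < lin P x -> exists w, P w && (0 < x w).
Proof.
move=> h; case: (pickP (fun w => P w && (0 < x w))) => [w hw|hn]; first by exists w.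
suff : lin P x <= 0 by rewrite leNgt h.
rewrite /lin; apply: sumr_le0 => w Pw; have := hn w; rewrite /= Pw /= => /negbT.
by rewrite -leNgt.
Qed.

Lemma sum_pos_ex S (f : 'I_S -> int) : 0 < \sum_a f a -> exists a, 0 < f a.
Proof.
move=> h; case: (pickP (fun a => 0 < f a)) => [a ha|hn]; first by exists a.
suff : \sum_a f a <= 0 by rewrite leNgt h.
apply: sumr_le0 => a _; have := hn a; rewrite /= => /negbT.
by rewrite -leNgt.
Qed.

Lemma sw_off S (p b q a' c' : 'I_S) (w : pth S) : w o1 != b -> sw p b q a' c' w = 0.
Proof.
move=> nb; rewrite sw_val {1 2 3 4}(pathE w) !mk3_eqE (negbTE nb) !andbF.
by rewrite /= subrr.
Qed.

Lemma sum_e_set S (W : {set pth S}) w : (\sum_(v in W) e v) w = ind (w \in W).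
Proof.
rewrite sum_ffunE; under eq_bigr do rewrite ffunE.
case: (boolP (w \in W)) => Ww.
  rewrite (bigD1 w) //= eqxx big1 ?addr0 // => v /andP [_ nv].
  by rewrite eq_sym (negbTE nv).
rewrite big1 // => v Wv; case: eqP => [E|//]; by rewrite E Wv in Ww.
Qed.

Lemma sumF_G S (x : table S) b : \sum_a lin (Fp a b) x = \sum_c lin (Gp b c) x.
Proof. by rewrite sumF_col sumG_row. Qed.

Lemma ge_pos_ex S (f : 'I_S -> int) a0 : (forall a, 0 <= f a) -> 0 < f a0 ->
  0 < \sum_a f a.
Proof. by move=> H0 h; rewrite (bigD1 a0) //= ltr_pwDl // sumr_ge0. Qed.

Lemma ih6 (q : int) (b : bool) : 0 < q -> 0 <= q + (ind b - ind true).
Proof. by case: b => /=; lia. Qed.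

Lemma zbar_step S (B : table S -> Prop) (x : table S) m (ii jj : 'I_m -> 'I_S) :
  (forall z, crossing_move z -> B z) -> (forall z, zbar_move z -> B z) ->
  (2 <= m)%N -> injective ii -> injective jj -> (forall w, 0 <= x w) ->
  (forall l, 0 < lin (Gp (ii l) (jj l)) x) ->
  (forall l, 0 < lin (Fp (ii (nxt l)) (jj l)) x) ->
  exists u', reach B x u' /\ (forall w, 0 <= u' w) /\ stat u' = stat x /\
    (forall a b, lin (Fp a b) u' = lin (Fp a b) x + Cm ii jj a b).
Proof.
move=> HBc HBz m2 iI iJ Hx HG HF.
pose s b := odflt b [pick a | 0 < lin (Fp a b) x].
pose st b := odflt b [pick c | 0 < lin (Gp b c) x].
pose K := Iset ii :|: Jset jj.
pose pa b := al' ii jj s b.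
pose pc b := ka' ii jj st b.
have HS : forall b, 0 < lin (Mp b) x -> 0 < lin (Fp (s b) b) x.
  move=> b h; rewrite -sumF_col in h; have [a ha] := sum_pos_ex h.
  rewrite /s; case: pickP => [a' //|hn]; by have := hn a; rewrite /= ha.
have HST : forall b, 0 < lin (Mp b) x -> 0 < lin (Gp b (st b)) x.
  move=> b h; rewrite -sumG_row in h; have [c hc] := sum_pos_ex h.
  rewrite /st; case: pickP => [c' //|hn]; by have := hn c; rewrite /= hc.
have HMI l : 0 < lin (Mp (ii l)) x.
  rewrite -sumG_row; apply: (ge_pos_ex (a0 := jj l)) => [c|]; [exact: lin_ge0 | exact: HG].
have HMJ l : 0 < lin (Mp (jj l)) x.
  rewrite -sumF_col; apply: (ge_pos_ex (a0 := ii (nxt l))) => [c|]; [exact: lin_ge0 | exact: HF].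
have Hpa b : b \in K -> 0 < lin (Fp (pa b) b) x.
  rewrite /pa /al' /K inE; case: (li_cases b iJ) => [[l [Eb ->]]|[nJ ->]].
    by rewrite Eb => _; exact: HF.
  rewrite (negbTE nJ) orbF => /imsetP [l _ ->]; exact/HS/HMI.
have Hpc b : b \in K -> 0 < lin (Gp b (pc b)) x.
  rewrite /pc /ka' /K inE; case: (li_cases b iI) => [[l [Eb ->]]|[nI ->]].
    by rewrite Eb => _; exact: HG.
  rewrite (negbTE nI) /= => /imsetP [l _ ->]; exact/HST/HMJ.
pose c1 b := odflt b [pick c | 0 < x (mk3 (pa b) b c)].
pose a1 b := odflt b [pick a | 0 < x (mk3 a b (pc b))].
have Hc1 b : b \in K -> 0 < x (mk3 (pa b) b (c1 b)).
  move=> /Hpa /lin_pos_ex [w /andP [/andP [/eqP e0 /eqP e1] hw]].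
  rewrite /c1; case: pickP => [c' //|hn]; have := hn (w o2).
  by rewrite /= -e0 -e1 -pathE hw.
have Ha1 b : b \in K -> 0 < x (mk3 (a1 b) b (pc b)).
  move=> /Hpc /lin_pos_ex [w /andP [/andP [/eqP e1 /eqP e2] hw]].
  rewrite /a1; case: pickP => [a' //|hn]; have := hn (w o0).
  have Ew : mk3 (w o0) b (pc b) = w by rewrite [RHS]pathE e1 e2.
  by rewrite /= Ew hw.
pose cond b := (b \in K) && (x (mk3 (pa b) b (pc b)) == 0).
pose dl b := if cond b then sw (pa b) b (pc b) (a1 b) (c1 b) else 0.
have Hdist b : cond b -> (pa b != a1 b) /\ (pc b != c1 b).
  move=> /andP [Kb /eqP x0]; split; apply/eqP => E.
  - by move: (Ha1 _ Kb); rewrite -E x0 ltxx.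
  - by move: (Hc1 _ Kb); rewrite -E x0 ltxx.
pose u := x + \sum_b dl b.
have uE w : u w = x w + dl (w o1) w.
  rewrite ffunE sum_ffunE (bigD1 (w o1)) //= big1 ?addr0 // => b nb.
  rewrite /dl; case: ifP => _; last by rewrite ffunE.
  by apply: sw_off; rewrite eq_sym.
have Hu0 w : 0 <= u w.
  rewrite uE /dl; case: ifP => hc; last by rewrite ffunE addr0.
  have [n1 n2] := Hdist _ hc; have Kb : w o1 \in K by case/andP: hc.
  case: (sw_cases (w o1) w n1 n2) => [h|[-> [Ew|Ew]]].
  - exact: addr_ge0.
  - apply: (ih1 (lexx 0)); rewrite Ew; exact: Hc1.
  - apply: (ih1 (lexx 0)); rewrite Ew; exact: Ha1.
have Hu1 b : b \in K -> 0 < u (mk3 (pa b) b (pc b)).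
  move=> Kb; rewrite uE mk3E1 /dl; case: (boolP (cond b)) => hc.
    have [n1 n2] := Hdist _ hc; rewrite sw_at //.
    by case/andP: hc => _ /eqP ->; rewrite add0r.
  rewrite ffunE addr0; rewrite /cond Kb /= in hc.
  by rewrite lt_def hc Hx.
have dlF b p q : lin (Fp p q) (dl b) = 0.
  by rewrite /dl; case: ifP => _; [exact: sw_F | exact: lin0].
have dlG b p q : lin (Gp p q) (dl b) = 0.
  by rewrite /dl; case: ifP => _; [exact: sw_G | exact: lin0].
have HuF a b : lin (Fp a b) u = lin (Fp a b) x.
  by rewrite linD lin_sum big1 ?addr0 // => b' _; exact: dlF.
have HuG a b : lin (Gp a b) u = lin (Gp a b) x.
  by rewrite linD lin_sum big1 ?addr0 // => b' _; exact: dlG.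
have Hsu : stat u = stat x.
  apply: stat_move; apply: is_moveI => [p q|p].
    have E1 : \sum_b lin (Fp p q) (dl b) = 0 by apply: big1 => b _; exact: dlF.
    have E2 : \sum_b lin (Gp p q) (dl b) = 0 by apply: big1 => b _; exact: dlG.
    by rewrite !lin_sum E1 E2 addr0.
  by rewrite big1 // => q _; rewrite lin_sum big1 // => b _; exact: dlF.
have Rxu : reach B x u.
  apply: (cross_connect HBc Hx Hu0) => a b; [exact: esym (HuF a b) | exact: esym (HuG a b)].
pose z := zbar ii jj s st.
have mS : (m <= S)%N by have := leq_card _ iI; rewrite !card_ord.
have Bz : B z by apply: HBz; exists m, ii, jj, s, st.
have Hu'0 w : 0 <= (u + z) w.
  have zE : z w = ind (w \in W1 ii jj s st) - ind (w \in W2 ii jj s st).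
    by rewrite /z /zbar !ffunE !sum_e_set.
  rewrite [(u + z) w]ffunE zE.
  case: (boolP (w \in W2 ii jj s st)) => h2.
    move: (h2); rewrite W2E // => /imsetP [b Kb Ew].
    have := Hu1 _ Kb; rewrite -Ew; exact: ih6.
  by rewrite /= subr0; apply: addr_ge0 => //; case: (w \in _).
exists (u + z); split.
  apply: reach_trans Rxu _; apply: reach_step => //; by left.
split => //; split.
  by rewrite stat_move ?Hsu //; exact: zbar_is_move.
by move=> a b; rewrite linD HuF zbarF.
Qed.

Lemma nxt_neq m (l : 'I_m) : (2 <= m)%N -> nxt l != l.
Proof.
move=> m2; apply/eqP => /(congr1 val) /=.
case: (ltngtP l.+1 m) => h.
- by rewrite modn_small //; lia.
- by have := ltn_ord l; lia.
- by rewrite h modnn => E; move: h m2; rewrite -E; lia.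
Qed.

Lemma Cm_cases S m (ii jj : 'I_m -> 'I_S) (D : 'I_S -> 'I_S -> int) a b :
  (2 <= m)%N -> injective ii -> injective jj ->
  (forall l, 0 < D (ii l) (jj l)) -> (forall l, D (ii (ordS l)) (jj l) < 0) ->
  Cm ii jj a b = 0 \/ (Cm ii jj a b = 1 /\ 0 < D a b) \/ (Cm ii jj a b = -1 /\ D a b < 0).
Proof.
move=> m2 iI iJ Hp Hn; rewrite /Cm.
case: (li_cases b iJ) => [[l [Eb ->]]|[_ ->]]; last by left.
have nl : ii (nxt l) != ii l by rewrite (inj_eq iI) nxt_neq.
case: (eqVneq (ii l) a) => [<-|na].
  by right; left; rewrite (negbTE nl) Eb; split.
case: (eqVneq (ii (nxt l)) a) => [<-|nb].
  by right; right; rewrite Eb; split => //; exact: Hn.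
by left.
Qed.

Lemma Cm_at S m (ii jj : 'I_m -> 'I_S) l :
  (2 <= m)%N -> injective ii -> injective jj -> Cm ii jj (ii l) (jj l) = 1.
Proof.
move=> m2 iI iJ; rewrite /Cm liE // eqxx.
have nl : ii (nxt l) != ii l by rewrite (inj_eq iI) nxt_neq.
by rewrite (negbTE nl).
Qed.

Lemma ih7 (d : int) : 0 < d -> `|d - 1| < `|d|.
Proof.
move=> h; have h1 : 0 <= d - 1 by lia.
by rewrite (ger0_norm h1) (ger0_norm (ltW h)); lia.
Qed.
Lemma ih8 (d : int) : d < 0 -> `|d - -1| <= `|d|.
Proof.
move=> h; have h1 : d - -1 <= 0 by lia.
by rewrite (ler0_norm h1) (ler0_norm (ltW h)); lia.
Qed.
Lemma ih9 (d : int) : 0 < d -> `|d - 1| <= `|d|.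
Proof. by move=> h; apply: ltW; exact: ih7. Qed.

Lemma sum2_lt S (f g : 'I_S -> 'I_S -> int) a0 b0 :
  (forall a b, f a b <= g a b) -> f a0 b0 < g a0 b0 ->
  \sum_a \sum_b f a b < \sum_a \sum_b g a b.
Proof.
move=> le lt; rewrite (bigD1 a0) // [X in _ < X](bigD1 a0) //=.
apply: ltr_leD; last by apply: ler_sum => a _; apply: ler_sum => b _.
rewrite (bigD1 b0) // [X in _ < X](bigD1 b0) //=.
by apply: ltr_leD => //; apply: ler_sum => b _.
Qed.

Lemma ih10 (k : int) : 0 <= k -> k < ((absz k).+1)%:Z.
Proof. lia. Qed.

Definition KD S (x y : table S) : int :=
  \sum_a \sum_b `|lin (Fp a b) y - lin (Fp a b) x|.

Lemma main_reach S (B : table S -> Prop) (y : table S) :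
  (forall z, crossing_move z -> B z) -> (forall z, zbar_move z -> B z) ->
  (forall w, 0 <= y w) ->
  forall n (x : table S), KD x y < n%:Z -> (forall w, 0 <= x w) ->
  stat x = stat y -> reach B x y.
Proof.
move=> HBc HBz Hy; elim => [|n IH] x.
  have : 0 <= KD x y by apply: sumr_ge0 => a _; apply: sumr_ge0 => b _.
  by move=> + Hlt; rewrite leNgt Hlt.
move=> Hn Hx Hs.
have [Hr [Hc HGD]] := stat_eq_F Hs.
pose D a b := lin (Fp a b) y - lin (Fp a b) x.
case: (pickP (fun ab : 'I_S * 'I_S => D ab.1 ab.2 != 0)) => [[a b] /= hab | hn]; last first.
  have HD a b : D a b = 0 by have := hn (a, b); rewrite /= => /negbFE /eqP.
  apply: cross_connect => // [p q|p q].
    by have := HD p q; rewrite /D => /eqP; rewrite subr_eq0 => /eqP E; exact: esym E.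
  have := HGD p q; have := HD p q; rewrite /D => E1; rewrite E1 oppr0.
  by move=> /eqP; rewrite subr_eq0 => /eqP E; exact: esym E.
have [a0 [b0 D0]] : exists a0 b0, 0 < D a0 b0.
  have [lt|gt] : D a b < 0 \/ 0 < D a b.
    by move: hab; case: (ltrgtP (D a b) 0) => //; [left|right].
  - have [b' hb'] := @sum0_pos S (fun b => D a b) b (Hr a) lt.
    by exists a, b'.
  - by exists a, b.
have [m [ii [jj [m2 [iI [iJ [Hp Hneg]]]]]]] := cycle_exists Hr Hc D0.
have HGx l : 0 < lin (Gp (ii l) (jj l)) x.
  have := HGD (ii l) (jj l); have := Hp l; rewrite /D.
  have := lin_ge0 (Gp (ii l) (jj l)) Hy; lia.
have HFx l : 0 < lin (Fp (ii (nxt l)) (jj l)) x.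
  have := Hneg l; rewrite /D /nxt.
  have := lin_ge0 (Fp (ii (ordS l)) (jj l)) Hy; lia.
have [u' [Ru [Hu0 [Hsu HuF]]]] := zbar_step HBc HBz m2 iI iJ Hx HGx HFx.
apply: (reach_trans Ru); apply: IH => //; last by rewrite Hsu.
apply: (@ih2 _ (KD x y)) => //.
rewrite /KD; under eq_bigr do under eq_bigr do rewrite HuF.
have m0 : (0 < m)%N by apply: ltn_trans m2.
pose l0 : 'I_m := Ordinal m0.
apply: (sum2_lt (a0 := ii l0) (b0 := jj l0)) => [p q|].
- rewrite opprD addrA.
  case: (@Cm_cases S m ii jj D p q m2 iI iJ Hp Hneg) => [->|[[-> h]|[-> h]]].
  + by rewrite subr0.
  + exact: ih9 h.
  + exact: ih8 h.
- rewrite Cm_at // opprD addrA; exact: ih7 (Hp l0).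
Qed.

Theorem proposition2 (S : nat) : (2 <= S)%N ->
  markov_basis (fun z : table S => crossing_move z \/ zbar_move z).
Proof.
move=> _; split.
  move=> z [Hc|[m [ii [jj [s [st [_ [_ [iI [iJ ->]]]]]]]]]].
  - exact: crossing_is_move.
  - exact: zbar_is_move.
move=> b x y [Hx Hsx] [Hy Hsy].
have Hs : stat x = stat y by rewrite Hsx Hsy.
have R := @main_reach S (fun z : table S => crossing_move z \/ zbar_move z) y
  (fun z h => or_introl h) (fun z h => or_intror h) Hy (absz (KD x y)).+1 x.
have K0 : 0 <= KD x y by apply: sumr_ge0 => a _; apply: sumr_ge0 => c _.
have [zs [H1 [H2 H3]]] := R (ih10 K0) Hx Hs.
by exists zs.
Qed.
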